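(* Let $K=\mathbb{F}_q$, $S=K[t_1,\ldots,t_s]$, and let $\mathcal{X}=[A_1\times\cdots\times A_s]\subset\mathbb{P}^{s-1}$ be a projective nested cartesian set with $d_i=|A_i|$. Then $\delta_{\mathcal{X}}(1)=d_2\cdots d_s$.
   Context: Projective nested cartesian set: for subsets $A_1,\ldots,A_s$ of $K$, $\mathcal{X}=[A_1\times\cdots\times A_s]$ is the image of $(A_1\times\cdots\times A_s)\setminus\{0\}$ under $K^s\setminus\{0\}\to\mathbb{P}^{s-1}$, $x\mapsto[x]$, and it is required that (i) $\{0,1\}\subset A_i$ for all $i$; (ii) $a/b\in A_j$ whenever $1\leq i<j\leq s$, $a\in A_j$, $0\neq b\in A_i$; (iii) $d_1\leq\cdots\leq d_s$ where $d_i=|A_i|$. $I(\mathcal{X})$ is the vanishing ideal of $\mathcal{X}$ and $V_{\mathcal{X}}(f)$ the zero set in $\mathcal{X}$ of a form $f$. $\delta_{\mathcal{X}}(d)=\min\{|\mathcal{X}|-|V_{\mathcal{X}}(f)|: f\in S_d,\ f\notin I(\mathcal{X})\}$ is the minimum distance of the degree-$d$ projective Reed–Muller-type code on $\mathcal{X}$. *)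

(* Defs.v *)
From HB Require Import structures.
From mathcomp Require Import all_boot all_order all_algebra all_field.
From mathcomp Require Export mpoly.
Set Implicit Arguments. Unset Strict Implicit. Unset Printing Implicit Defensive.
Import GRing.Theory.
Local Open Scope ring_scope.

(* Vectors of K^s are finite functions 'I_s -> K.  A point of P^{s-1} is
   represented literally as its punctured line { c x | c in K^* } (x <> 0). *)
Section Proj.
Variables (K : finFieldType) (s : nat).

Definition projpt (x : {ffun 'I_s -> K}) : {set {ffun 'I_s -> K}} :=
  [set [ffun i => c * x i] | c in [set: K] :\ 0].

Definition cartset (A : 'I_s -> {set K}) : {set {ffun 'I_s -> K}} :=
  [set x : {ffun 'I_s -> K} | [forall i, x i \in A i]].

Definition projcart (A : 'I_s -> {set K}) : {set {set {ffun 'I_s -> K}}} :=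
  [set projpt x | x in [set y in cartset A | y != [ffun=> 0]]].

Definition proj_nested (A : 'I_s -> {set K}) : Prop :=
  [/\ (forall i, (0 \in A i) /\ (1 \in A i)),
      (forall i j : 'I_s, (i < j)%N -> forall a b, a \in A j -> b \in A i ->
         b != 0 -> a / b \in A j)
    & (forall i j : 'I_s, (i <= j)%N -> #|A i| <= #|A j|)%N].

Definition zeroset (X : {set {set {ffun 'I_s -> K}}}) (f : {mpoly K[s]}) :=
  [set P in X | [forall x in P, f.@[x] == 0]].

Definition vanishes_on (X : {set {set {ffun 'I_s -> K}}}) (f : {mpoly K[s]}) :=
  forall P, P \in X -> forall x, x \in P -> f.@[x] = 0.

Definition is_min_distance (X : {set {set {ffun 'I_s -> K}}}) (d m : nat) :=
  (exists f : {mpoly K[s]}, [/\ f \is d.-homog, ~ vanishes_on X f &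
        (#|X| - #|zeroset X f|)%N = m]) /\
  (forall f : {mpoly K[s]}, f \is d.-homog -> ~ vanishes_on X f ->
        (m <= #|X| - #|zeroset X f|)%N).
End Proj.

(* Main.v *)
Require Import Defs.
From mathcomp Require Import all_boot all_order all_algebra all_field.
From mathcomp Require Import mpoly.
Set Implicit Arguments. Unset Strict Implicit. Unset Printing Implicit Defensive.
Import GRing.Theory.
Local Open Scope ring_scope.

Lemma lin_form (K : finFieldType) (s : nat) (f : {mpoly K[s]}) :
  f \is 1.-homog -> forall x : {ffun 'I_s -> K}, f.@[x] = \sum_i f@_U_(i) * x i.
Proof.
move=> hf x.
have E : f = \sum_i f@_U_(i) *: 'X_i.
  apply/mpolyP=> m.
  rewrite raddf_sum /=.
  have [mf|mnf] := boolP (m \in msupp f).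
    have := dhomog_mf hf mf => /eqP /mdeg1P [j /eqP hj]; rewrite hj.
    rewrite (bigD1 j) //= mcoeffZ mcoeffXU eqxx mulr1 big1 ?addr0 //.
    by move=> i hij; rewrite mcoeffZ mcoeffXU (negbTE hij) mulr0.
  move: mnf; rewrite mcoeff_msupp negbK => /eqP hm0; rewrite hm0.
  rewrite big1 // => i _; rewrite mcoeffZ mcoeffX.
  by case: eqP => [hU|_]; [rewrite hU hm0 mul0r|rewrite mulr0].
rewrite {1}E (big_morph (meval x) (mevalD x) (meval0 x)); apply: eq_bigr => i _.
by rewrite mevalZ mevalXU.
Qed.
Lemma card_box (K : finType) (s : nat) (B : 'I_s -> {set K}) :
  #|[set x : {ffun 'I_s -> K} | [forall i, x i \in B i]]| = (\prod_i #|B i|)%N.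
Proof.
have := card_family (fun i : 'I_s => mem (B i)).
rewrite foldrE big_map big_enum /= => <-.
rewrite cardsE; apply: eq_card => x; rewrite !inE.
apply/forallP/familyP => h i; exact: h.
Qed.

Section Main.
Variables (K : finFieldType) (s : nat) (A : 'I_s -> {set K}).
Hypothesis hA : proj_nested A.

Definition lay (t : nat) : {set {ffun 'I_s -> K}} :=
  [set x in cartset A | [forall j : 'I_s,
     ((j < t)%N ==> (x j == 0)) && ((j == t :> nat) ==> (x j == 1))]].

Lemma layP t (x : {ffun 'I_s -> K}) : x \in lay t ->
  [/\ forall j, x j \in A j, forall j : 'I_s, (j < t)%N -> x j = 0
    & forall j : 'I_s, j = t :> nat -> x j = 1].
Proof.
rewrite !inE => /andP [/forallP hc /forallP hl]; split => // j hj.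
  by have /andP [/implyP /(_ hj) /eqP] := hl j.
by have /andP [_ /implyP] := hl j; rewrite hj eqxx => /(_ isT) /eqP.
Qed.

Lemma layI t (x : {ffun 'I_s -> K}) : (forall j, x j \in A j) -> (forall j : 'I_s, (j < t)%N -> x j = 0) ->
   (forall j : 'I_s, j = t :> nat -> x j = 1) -> x \in lay t.
Proof.
move=> hc h0 h1; rewrite !inE; apply/andP; split; first exact/forallP.
apply/forallP => j; apply/andP; split; apply/implyP => hj.
  by rewrite h0.
by rewrite h1 //; apply/eqP.
Qed.

Lemma mem_projpt (x : {ffun 'I_s -> K}) : x \in projpt x.
Proof.
apply/imsetP; exists 1; first by rewrite !inE oner_eq0.
by apply/ffunP => i; rewrite ffunE mul1r.
Qed.

Lemma in_projpt y (x : {ffun 'I_s -> K}) : y \in projpt x -> exists2 c, c != 0 & y = [ffun i => c * x i].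
Proof. by case/imsetP => c; rewrite !inE andbT => hc ->; exists c. Qed.

Lemma projpt_scale c (x : {ffun 'I_s -> K}) : c != 0 -> projpt [ffun i => c * x i] = projpt x.
Proof.
move=> hc; apply/setP => y; apply/imsetP/imsetP => [[d]|[d]].
  rewrite !inE andbT => hd ->; exists (d * c); first by rewrite !inE andbT mulf_neq0.
  by apply/ffunP => i; rewrite !ffunE mulrA.
rewrite !inE andbT => hd ->; exists (d / c); first by rewrite !inE andbT mulf_neq0 ?invr_eq0.
by apply/ffunP => i; rewrite !ffunE mulrA divfK.
Qed.

Lemma lay_disj t t' (x : {ffun 'I_s -> K}) : (t < s)%N -> (t < t')%N -> x \in lay t -> x \in lay t' -> False.
Proof.
move=> hts htt /layP [_ _ h1] /layP [_ h0 _].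
have := h1 (Ordinal hts) erefl; rewrite h0 //= => /eqP; by rewrite eq_sym oner_eq0.
Qed.

Lemma lay_inj t t' (x y : {ffun 'I_s -> K}) : (t < s)%N -> (t' < s)%N -> x \in lay t -> y \in lay t' ->
  projpt x = projpt y -> x = y.
Proof.
move=> ht ht' hx hy e.
have := mem_projpt y; rewrite -e => /in_projpt [c hc ey].
have [hlt|hgt|heq] := ltngtP t t'.
- case/layP: hy => _ h0 _; have := h0 (Ordinal ht) hlt.
  rewrite ey ffunE; case/layP: hx => _ _ ->; rewrite ?mulr1 //.
  by move/eqP; rewrite (negbTE hc).
- case/layP: hy => _ _ h1; have := h1 (Ordinal ht') erefl.
  rewrite ey ffunE; case/layP: hx => _ h0x _; rewrite h0x // mulr0.
  by move/eqP; rewrite eq_sym oner_eq0.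
- subst t'; case/layP: hy => _ _ h1; have := h1 (Ordinal ht) erefl.
  rewrite ey ffunE; case/layP: hx => _ _ -> //; rewrite mulr1 => hc1.
  by apply/ffunP => i; rewrite ffunE hc1 mul1r.
Qed.

Lemma lay_X t (x : {ffun 'I_s -> K}) : (t < s)%N -> x \in lay t -> projpt x \in projcart A.
Proof.
move=> ht hx; apply/imsetP; exists x => //.
case/layP: (hx) => hc _ h1; rewrite !inE; apply/andP; split; first exact/forallP.
apply/eqP => x0; have := h1 (Ordinal ht) erefl; rewrite x0 ffunE => /eqP.
by rewrite eq_sym oner_eq0.
Qed.

Lemma card_lay0 (hs : (0 < s)%N) : #|lay 0| = (\prod_(i < s | (0 < i)%N) #|A i|)%N.
Proof.
case: hA => h01 _ _.
have -> : lay 0 = [set x : {ffun 'I_s -> K} |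
    [forall i, x i \in (if (i == 0 :> nat) then [set 1] else A i)]].
  apply/setP => x; rewrite [in RHS]inE; apply/idP/forallP.
    case/layP => hc _ h1 i; case: ifP => [/eqP hi|_] //.
    by rewrite h1 // inE.
  move=> h; apply: layI => // j.
  - by have := h j; case: ifP => // /eqP hj; rewrite inE => /eqP ->; case: (h01 j).
  - move=> hj; have := h j; rewrite hj inE => /eqP //.
rewrite card_box [RHS]big_mkcond /=; apply: eq_bigr => i _.
by rewrite lt0n; case: (i == 0 :> nat) => //=; rewrite cards1.
Qed.

Definition good (f : {mpoly K[s]}) := projcart A :\: zeroset (projcart A) f.

Lemma card_good f : (#|projcart A| - #|zeroset (projcart A) f|)%N = #|good f|.
Proof.
rewrite cardsD (setIidPr _) //.
by apply/subsetP => P; rewrite inE => /andP [].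
Qed.

Lemma in_good f t (x : {ffun 'I_s -> K}) : (t < s)%N -> x \in lay t -> f.@[x] != 0 -> projpt x \in good f.
Proof.
move=> ht hx hf; rewrite !inE (lay_X ht hx) /= andbT.
apply/forallP => /(_ x); rewrite mem_projpt /=; exact/negP.
Qed.


Section Lower.
Variables (a : 'I_s -> K) (k : 'I_s).
Hypotheses (hak : a k != 0) (hz : forall j : 'I_s, (k < j)%N -> a j = 0).

Definition L (x : {ffun 'I_s -> K}) := \sum_i a i * x i.
Definition NZ := [set x : {ffun 'I_s -> K} | L x != 0].
Definition U (r : nat) := [set x in NZ | [exists t : 'I_s, ((r <= t <= k)%N) && (x \in lay t)]].

Lemma L_det x y : L x = L y -> (forall j, j != k -> x j = y j) -> x = y.
Proof.
move=> e h; apply/ffunP => j; case: (eqVneq j k) => [->|/h //].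
have : L x - L y = a k * (x k - y k).
  rewrite /L -sumrB (bigD1 k) //= big1 ?addr0 ?mulrBr // => i hi.
  by rewrite h // subrr.
rewrite e subrr => /esym /eqP; rewrite mulf_eq0 (negbTE hak) /= subr_eq0.
by move/eqP.
Qed.

Lemma L_layk x : x \in lay k -> L x = a k.
Proof.
case/layP => _ h0 h1; rewrite /L (bigD1 k) //= h1 // mulr1 big1 ?addr0 // => i hi.
have [hlt|hgt|heq] := ltngtP i k.
- by rewrite h0 // mulr0.
- by rewrite hz // mul0r.
- by move: hi; rewrite (ord_inj heq) eqxx.
Qed.

Lemma bad_le r : (r < k)%N -> (#|lay r :\: NZ| <= #|lay r.+1|)%N.
Proof.
move=> hr; case: hA => h01 hdiv _.
have hr1 : (r.+1 < s)%N by apply: leq_ltn_trans hr (ltn_ord k).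
set r1 := Ordinal hr1.
pose phi (x : {ffun 'I_s -> K}) : {ffun 'I_s -> K} :=
  [ffun j : 'I_s => if (j <= r)%N then 0 else if j == r1 then 1
     else if j == k then (x r1)^-1 else x j].
have hkr : (k <= r)%N = false by rewrite leqNgt hr.
rewrite -(@card_in_imset _ _ phi); first apply: subset_leq_card.
  apply/subsetP => _ /imsetP [x /setDP [hx _] ->].
  case/layP: hx => hc h0 h1.
  apply: layI => [j|j hj|j hj]; rewrite ffunE.
  - case: ifP => _; first by case: (h01 j).
    case: ifP => [/eqP ->|hjr1]; first by case: (h01 r1).
    case: ifP => [/eqP hjk|_]; last exact: hc.
    have hrk : (r1 < k)%N.
      rewrite ltn_neqAle hr andbT; apply/negP => /eqP e.
      by move: hjr1; rewrite hjk (ord_inj e) eqxx.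
    rewrite hjk.
    have [->|nz] := eqVneq (x r1) 0; first by rewrite invr0; case: (h01 k).
    have := hdiv r1 k hrk 1 (x r1) (h01 k).2 (hc r1) nz.
    by rewrite div1r.
  - by rewrite ifT.
  - by rewrite ifN ?ifT //= ?hj ?ltnn //; apply/eqP/ord_inj.
move=> x y /setDP [hx hnx] /setDP [hy hny] e.
have Lx : L x = 0 by move: hnx; rewrite inE negbK => /eqP.
have Ly : L y = 0 by move: hny; rewrite inE negbK => /eqP.
apply: L_det; first by rewrite Lx Ly.
move=> j hjk.
case/layP: hx => _ hx0 hx1; case/layP: hy => _ hy0 hy1.
case: (ltngtP j r) => [hjr|hjr|hjr].
- by rewrite hx0 ?hy0.
- have := congr1 (fun g : {ffun 'I_s -> K} => g j) e; rewrite /phi !ffunE /=.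
  rewrite leqNgt hjr /=.
  case: ifP => [/eqP hj1 _|_]; last by rewrite (negbTE hjk).
  have := congr1 (fun g : {ffun 'I_s -> K} => g k) e; rewrite /phi !ffunE /= hkr eqxx.
  have -> : (k == r1) = false.
    by apply/negbTE; apply: contra hjk => /eqP ->; rewrite hj1.
  by rewrite hj1 => /invr_inj.
- by rewrite hx1 ?hy1.
Qed.

Lemma U_ind n : (n <= k)%N -> (#|lay (k - n)| <= #|U (k - n)|)%N.
Proof.
elim: n => [_|n IH hn].
  rewrite subn0; apply: subset_leq_card; apply/subsetP => x hx.
  rewrite !inE (L_layk hx) hak /=; apply/existsP; exists k.
  by rewrite !leqnn hx.
have e : (k - n.+1).+1%N = (k - n)%N by rewrite subnSK.
set r := (k - n.+1)%N in e *.
have hrk : (r < k)%N by rewrite e leq_subr.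
have hrs : (r < s)%N by apply: ltn_trans hrk (ltn_ord k).
rewrite -(cardsID NZ (lay r)).
apply: leq_trans (_ : #|lay r :&: NZ| + #|U r.+1| <= _)%N.
  rewrite leq_add2l; apply: leq_trans (bad_le hrk) _; rewrite e; exact: IH (ltnW hn).
have hd : [disjoint lay r :&: NZ & U r.+1].
  rewrite -setI_eq0; apply/eqP/setP => x; rewrite in_set0.
  apply/negP => /setIP [/setIP [hx _]].
  rewrite !inE => /andP [_ /existsP [t /andP [/andP [ht _] hxt]]].
  exact: (lay_disj hrs ht hx hxt).
have := cardsU (lay r :&: NZ) (U r.+1); rewrite (disjoint_setI0 hd) cards0 subn0 => <-.
apply: subset_leq_card; apply/subsetP => x /setUP [/setIP [hx hnz]|hu].
  rewrite inE hnz /=; apply/existsP; exists (Ordinal hrs).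
  by rewrite /= leqnn (ltnW hrk) hx.
move: hu; rewrite !inE => /andP [-> /existsP [t /andP [/andP [ht htk] hxt]]] /=.
by apply/existsP; exists t; rewrite (ltnW ht) htk hxt.
Qed.

Lemma lower (f : {mpoly K[s]}) : (forall x : {ffun 'I_s -> K}, f.@[x] = L x) -> (#|lay 0| <= #|good f|)%N.
Proof.
move=> hf; have := U_ind (leqnn k); rewrite subnn => h.
apply: leq_trans h _.
rewrite -(@card_in_imset _ _ (@projpt K s)).
  apply: subset_leq_card; apply/subsetP => _ /imsetP [x hx ->].
  rewrite !inE in hx; case/andP: hx => hnz /existsP [t /andP [/andP [_ htk] hxt]].
  by apply: (in_good (ltn_ord t) hxt); rewrite hf.
move=> x y; rewrite !inE => /andP [_ /existsP [t /andP [/andP [_ htk] hxt]]].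
move=> /andP [_ /existsP [t' /andP [/andP [_ htk'] hyt]]].
exact: (lay_inj (ltn_ord t) (ltn_ord t') hxt hyt).
Qed.

End Lower.
End Main.

Theorem proposition6p8 (K : finFieldType) (s : nat) (hs : (0 < s)%N)
    (A : 'I_s -> {set K}) (hA : proj_nested A) :
  is_min_distance (projcart A) 1
    (\prod_(i < s | (0 < i)%N) #|A i|)%N.
Proof.
case: (hA) => h01 hdiv _.
set i0 : 'I_s := Ordinal hs.
split.
- exists 'X_i0; split.
  + by rewrite dhomogX; apply/eqP; exact: mdeg1.
  + move=> hv.
    pose e : {ffun 'I_s -> K} := [ffun i => if i == i0 then 1 else 0].
    have he : e \in lay A 0.
      apply: layI => [j|j //|j hj]; rewrite ffunE.
        by case: ifP => _; case: (h01 j).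
      by have -> : j == i0 by apply/eqP/ord_inj.
    have := hv _ (lay_X hs he) e (mem_projpt e).
    by rewrite mevalXU ffunE eqxx => /eqP; rewrite oner_eq0.
  + rewrite card_good -card_lay0 //.
    have -> : good A 'X_i0 = (@projpt K s) @: lay A 0.
      apply/setP => P; apply/idP/imsetP.
        move/setDP => [hX hnZ].
        have : ~~ [forall y in P, ('X_i0 : {mpoly K[s]}).@[y] == 0] by move: hnZ; rewrite inE hX.
        case/forall_inPn => y hy hny.
        case/imsetP: hX => x; rewrite !inE => /andP [/forallP hc hx0] eP.
        move: hy; rewrite eP => /in_projpt [c hc0 ey].
        have hxi0 : x i0 != 0.
          by move: hny; rewrite ey mevalXU ffunE; apply: contra => /eqP ->; rewrite mulr0.
        exists [ffun i => (x i0)^-1 * x i]; last by rewrite projpt_scale // invr_eq0.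
        apply: layI => [j|j //|j hj]; rewrite ffunE.
          have [->|hj] := eqVneq j i0; first by rewrite mulVf //; case: (h01 i0).
          have hlt : (i0 < j)%N by rewrite lt0n; apply: contra hj => /eqP hj0; apply/eqP/ord_inj.
          by rewrite mulrC; apply: (hdiv _ _ hlt _ _ (hc j) (hc i0) hxi0).
        have -> : j = i0 by apply/ord_inj; rewrite hj.
        by rewrite mulVf.
      case=> x hx ->; apply: (in_good hs hx).
      by rewrite mevalXU; case/layP: hx => _ _ ->; rewrite ?oner_eq0.
    rewrite card_in_imset // => x y hx hy; exact: (lay_inj hs hs hx hy).
- move=> f hf hnv; rewrite card_good -card_lay0 //.
  have hL := lin_form hf.
  case: (pickP (fun i => f@_U_(i) != 0)) => [i hi|h0]; last first.
    exfalso; apply: hnv => P _ x _; rewrite hL big1 // => i _.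
    by have := h0 i => /negbFE/eqP ->; rewrite mul0r.
  case: (@arg_maxnP _ i (fun j => f@_U_(j) != 0) (fun j : 'I_s => nat_of_ord j) hi) => k hk hmax.
  have hz : forall j : 'I_s, (k < j)%N -> f@_U_(j) = 0.
    move=> j hkj; apply/eqP; apply: contraTT hkj => hj.
    by rewrite -leqNgt; exact: hmax.
  apply: (@lower K s A hA (fun i => f@_U_(i)) k hk hz f) => x.
  by rewrite hL.
Qed.
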